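(* Let $N\ge 1$ and $n\ge 2$ be integers. Let $\phi_0,\phi_1,\phi_2,\dots$ be the orthonormal Hermite polynomials with respect to the weight $M(v)=\frac{1}{\sqrt{2\pi}}e^{-v^2/2}$, i.e. $\int_{\mathbb{R}}\phi_i(v)\phi_j(v)M(v)\,dv=\delta_{ij}$, with $\phi_0=1$, $\phi_1(v)=v$ and $v\phi_k(v)=\sqrt{k}\,\phi_{k-1}(v)+\sqrt{k+1}\,\phi_{k+1}(v)$. Let $0<z_1<\dots<z_N$ be the positive roots of $\phi_{2N}$, and set $v_j=-z_j$, $v_{N+j}=z_j$ for $j=1,\dots,N$. Let $V$ be the $2N\times 2N$ matrix with entries $V_{ij}=\phi_{i}(v_{j+1})$ for $i,j=0,\dots,2N-1$ (so the columns of $V$ correspond to the velocities $v_1,\dots,v_{2N}$ in this order). Let $A$ be the symmetric tridiagonal $2N\times 2N$ matrix with zero diagonal and off-diagonal entries $A_{p-1,p}=A_{p,p-1}=\sqrt{p}$ for $p=1,\dots,2N-1$ (indices from $0$). Define the $N\times 2N$ matrix $B_2=\begin{pmatrix} I_N & (n-1)I_N\end{pmatrix}V^T$. Then $y^TAy\le 0$ for every $y\in\ker(B_2)$. Moreover, if $n\ge 3$, then $y^TAy<0$ for every nonzero $y\in\ker(B_2)$.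
   Context: $I_N$ denotes the $N\times N$ identity matrix. The matrix $B_2$ encodes the boundary condition $B_2U(0,t)=0$ arising from the symmetric coupling condition $f^{(i)}(t,0,v)=\frac{1}{n-1}\sum_{k\ne i}f^{(k)}(t,0,-v)$ ($v>0$) at an $n$-edge network junction, for differences of moment vectors on two edges. *)

(* Defs.v *)
From HB Require Import structures.
From mathcomp Require Import all_boot all_order all_algebra.
Set Implicit Arguments. Unset Strict Implicit. Unset Printing Implicit Defensive.
Import Order.TTheory GRing.Theory Num.Theory.
Local Open Scope ring_scope.

Section Defs.
Variable R : rcfType.

(* herm_pair k = (phi_k, phi_(k+1)), orthonormal Hermite polynomials defined by
   phi_0 = 1, phi_1 = X, X phi_k = sqrt k phi_(k-1) + sqrt (k+1) phi_(k+1). *)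
Fixpoint herm_pair (k : nat) : {poly R} * {poly R} :=
  match k with
  | 0 => (1, 'X)
  | k'.+1 =>
      let: (p, q) := herm_pair k' in
      (q, (Num.sqrt (k'.+2)%:R)^-1 *: ('X * q - Num.sqrt (k'.+1)%:R *: p))
  end.

Definition hermite (k : nat) : {poly R} := (herm_pair k).1.

(* velocities v_1..v_2N (index j : 'I_(N+N) corresponds to v_(j+1)):
   first N are -z_j, last N are z_j *)
Definition velocity (N : nat) (z : 'I_N -> R) (j : 'I_(N + N)) : R :=
  match split j with inl k => - z k | inr k => z k end.

Definition Vmat (N : nat) (z : 'I_N -> R) : 'M[R]_(N + N) :=
  \matrix_(i, j) (hermite i).[velocity z j].

Definition Amat (N : nat) : 'M[R]_(N + N) :=
  \matrix_(i, j) (if j == i.+1 :> nat then Num.sqrt (j%:R)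
                  else if i == j.+1 :> nat then Num.sqrt (i%:R) else 0).

Definition B2mat (N n : nat) (z : 'I_N -> R) : 'M[R]_(N, N + N) :=
  row_mx (1%:M) ((n - 1)%:R%:M) *m (Vmat z)^T.

End Defs.

(* Main.v *)
Require Import Defs.
From HB Require Import structures.
From mathcomp Require Import all_boot all_order all_algebra.
From mathcomp Require Import ring lra zify.
Import Order.TTheory GRing.Theory Num.Theory.
Local Open Scope ring_scope.

Section Helpers.
Variable R : rcfType.
Local Notation H := (hermite R).

Lemma hermiteSS k : H k.+2 =
  (Num.sqrt (k.+2)%:R)^-1 *: ('X * H k.+1 - Num.sqrt (k.+1)%:R *: H k).
Proof. by rewrite /hermite /=; case: (herm_pair R k). Qed.

Lemma hermite0 : H 0 = 1. Proof. by []. Qed.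
Lemma hermite1 : H 1 = 'X. Proof. by []. Qed.

Lemma sqrt_nat_gt0 k : 0 < Num.sqrt (k.+1)%:R :> R.
Proof. by rewrite sqrtr_gt0 ltr0Sn. Qed.

Lemma hermite_rec_eval k (x : R) : x * (H k.+1).[x] =
  Num.sqrt (k.+2)%:R * (H k.+2).[x] + Num.sqrt (k.+1)%:R * (H k).[x].
Proof.
rewrite hermiteSS hornerZ hornerD hornerN hornerZ hornerM hornerX.
have h := sqrt_nat_gt0 k.+1.
rewrite mulrA mulfV ?gt_eqF // mul1r; ring.
Qed.

Lemma herm_parity2 k (x : R) : (H k).[-x] = (-1)^+k * (H k).[x] /\
  (H k.+1).[-x] = (-1)^+k.+1 * (H k.+1).[x].
Proof.
elim: k => [|k [IH1 IH2]].
  by rewrite hermite0 hermite1 !hornerE; split => //; ring.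
split => //.
rewrite hermiteSS !(hornerZ, hornerD, hornerN, hornerM, hornerX) IH1 IH2 !exprS; ring.
Qed.

Lemma herm_parity k (x : R) : (H k).[-x] = (-1)^+k * (H k).[x].
Proof. by case: (herm_parity2 k x). Qed.

Lemma herm_sq_even k (x : R) : (H k).[-x] * (H k).[-x] = (H k).[x] * (H k).[x].
Proof. by rewrite herm_parity mulrACA -expr2 sqrr_sign mul1r. Qed.

Lemma sum_if_eq m a (F : nat -> R) :
  \sum_(k < m) (if (k:nat) == a then F k else 0) = if (a < m)%N then F a else 0.
Proof.
elim: m => [|m IH]; first by rewrite big_ord0.
rewrite big_ord_recr /= IH.
case: (ltngtP a m) => h.
- by rewrite ltnS ltnW // addr0.
- by rewrite ltnS leqNgt h addr0.
- by rewrite -h (ltnSn a) add0r.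
Qed.


Lemma Atr N : (Amat R N)^T = Amat R N.
Proof.
apply/matrixP => i j; rewrite !mxE.
have [E1|N1] := eqVneq (i:nat) j.+1; have [E2|N2] := eqVneq (j:nat) i.+1 => //.
by exfalso; move: E1 E2; lia.
Qed.

Lemma AV N (z : 'I_N -> R) (hN : (1 <= N)%N)
  (hr : forall j, root (H (N+N)) (velocity z j)) :
  Amat R N *m Vmat z = Vmat z *m diag_mx (\row_j velocity z j).
Proof.
apply/matrixP => i j; rewrite mul_mx_diag !mxE.
set x := velocity z j.
under eq_bigr => k _ do rewrite !mxE.
case: i => [[|i'] Hi] /=.
  rewrite (eq_bigr (fun k : 'I_(N+N) => if (k:nat) == 1%N then Num.sqrt (k%:R) * (H k).[x] else 0)).
    rewrite (sum_if_eq (N+N) 1 (fun k => Num.sqrt k%:R * (H k).[x])).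
    have -> : (1 < N + N)%N by rewrite -addn1 leq_add.
    by rewrite sqrtr1 mul1r hermite0 hermite1 hornerX hornerC mul1r.
  by move=> k _; case: ifP => _; rewrite ?mul0r.
rewrite (eq_bigr (fun k : 'I_(N+N) => (if (k:nat) == i'.+2 then Num.sqrt (k%:R) * (H k).[x] else 0)
   + (if (k:nat) == i' then Num.sqrt (i'.+1%:R) * (H k).[x] else 0))).
  rewrite big_split /= (sum_if_eq (N+N) i'.+2 (fun k => Num.sqrt k%:R * (H k).[x]))
    (sum_if_eq (N+N) i' (fun k => Num.sqrt i'.+1%:R * (H k).[x])) (ltnW Hi).
  have -> : (if (i'.+2 < N + N)%N then Num.sqrt (i'.+2%:R) * (H i'.+2).[x] else 0)
        = Num.sqrt (i'.+2%:R) * (H i'.+2).[x].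
    case: ifP => // /negbT; rewrite -leqNgt => hle.
    have -> : i'.+2 = (N + N)%N by apply/eqP; rewrite eqn_leq hle Hi.
    by rewrite (rootP (hr j)) mulr0.
  by rewrite [RHS]mulrC (hermite_rec_eval i' x).
move=> k _.
have [E|NE] := eqVneq (k:nat) i'.+2.
  by rewrite E ifN ?addr0 //; apply/eqP; lia.
rewrite add0r /=; rewrite eqSS [i' == _]eq_sym.
by case: ifP => [/eqP ->|_]; rewrite ?mul0r.
Qed.

End Helpers.

Theorem lemma4p1 (R : rcfType) (N n : nat) (hN : (1 <= N)%N) (hn : (2 <= n)%N)
  (z : 'I_N -> R)
  (z_incr : forall i j : 'I_N, (i < j)%N -> z i < z j)
  (z_pos : forall i, 0 < z i)
  (z_root : forall i, root (hermite R (N + N)) (z i))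
  (z_all : forall x : R, 0 < x -> root (hermite R (N + N)) x -> exists i, x = z i) :
  (forall y : 'cV[R]_(N + N), B2mat n z *m y = 0 ->
     ((y^T *m Amat R N *m y) 0 0) <= 0) /\
  ((3 <= n)%N -> forall y : 'cV[R]_(N + N), B2mat n z *m y = 0 -> y != 0 ->
     ((y^T *m Amat R N *m y) 0 0) < 0).
Proof.
set V := Vmat z. set v := velocity z.
set D := diag_mx (\row_j v j).
set A := Amat R N.
have zinj : injective z.
  move=> a b e; case: (ltngtP a b) => h.
  - by have := z_incr _ _ h; rewrite e ltxx.
  - by have := z_incr _ _ h; rewrite e ltxx.
  - exact: val_inj.
have vl : forall k, v (lshift N k) = - z k.
  by move=> k; rewrite /v /velocity (unsplitK (inl _ k)).
have vr : forall k, v (rshift N k) = z k.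
  by move=> k; rewrite /v /velocity (unsplitK (inr _ k)).
have vinj : injective v.
  move=> i j; case: (split_ordP i) => k ->; case: (split_ordP j) => l ->;
    rewrite ?vl ?vr.
  - by move/oppr_inj/zinj => ->.
  - by move=> e; exfalso; move: (z_pos k) (z_pos l) e; lra.
  - by move=> e; exfalso; move: (z_pos k) (z_pos l) e; lra.
  - by move/zinj => ->.
have hr : forall j, root (hermite R (N+N)) (velocity z j).
  move=> j; case: (split_ordP j) => k ->; rewrite -/v ?vl ?vr //.
  by apply/rootP; rewrite herm_parity (rootP (z_root k)) mulr0.
have hAV : A *m V = V *m D := @AV R N z hN hr.
have [C CE] : {C | C = V^T *m V} by exists (V^T *m V).
have Cdiag : forall i j, i != j -> C i j = 0.
  move=> i j nij.
  have e1 : V^T *m A *m V = C *m D by rewrite -mulmxA hAV mulmxA CE.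
  have e2 : V^T *m A *m V = D *m C.
    have At : A^T = A := Atr R N.
    by rewrite -At -trmx_mul hAV trmx_mul tr_diag_mx -mulmxA CE.
  have e : (C *m D) i j = (D *m C) i j by rewrite -e1 -e2.
  move: e; rewrite mul_mx_diag mul_diag_mx !mxE => e.
  have : (v i - v j) * C i j = 0 by rewrite mulrBl -e [v j * _]mulrC subrr.
  move/eqP; rewrite mulf_eq0 subr_eq0 => /orP[/eqP/vinj/eqP|/eqP //].
  by rewrite (negbTE nij).
have Cjj : forall j, C j j = \sum_(k < N + N) (hermite R k).[v j] * (hermite R k).[v j].
  by move=> j; rewrite CE !mxE; apply: eq_bigr => k _; rewrite !mxE.
have h0 : (0 < N + N)%N by rewrite addn_gt0 hN.
pose i0 : 'I_(N+N) := Ordinal h0.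
have cpos : forall j, 0 < C j j.
  move=> j; rewrite Cjj (bigD1 i0) //= hermite0 hornerC mul1r.
  have : 0 <= \sum_(k | k != i0) (hermite R k).[v j] * (hermite R k).[v j].
    by apply: sumr_ge0 => k _; rewrite -expr2 sqr_ge0.
  lra.
have cpar : forall k, C (lshift N k) (lshift N k) = C (rshift N k) (rshift N k).
  by move=> k; rewrite !Cjj vl vr; apply: eq_bigr => i _; rewrite herm_sq_even.
have Cdm : C = diag_mx (\row_j C j j).
  apply/matrixP => i j; rewrite [RHS]mxE [in RHS]mxE.
  by case: (eqVneq i j) => [->|nij]; [rewrite mulr1n | rewrite Cdiag // mulr0n].
have Vu : V \in unitmx.
  have : C \in unitmx.
    rewrite Cdm unitmxE det_diag unitfE; apply/prodf_neq0 => j _.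
    by rewrite mxE gt_eqF.
  by rewrite CE unitmx_mul => /andP[].
set s : R := (n - 1)%:R.
have key : forall y, B2mat n z *m y = 0 -> exists u : 'cV_(N+N),
   [/\ y = V *m u, (forall k, u (lshift N k) 0 = - s * u (rshift N k) 0) &
   (y^T *m A *m y) 0 0 = \sum_(k < N) (C (rshift N k) (rshift N k) * z k *
       (u (rshift N k) 0 * u (rshift N k) 0)) * (1 - s ^+ 2)].
  move=> y hB.
  have [u uE] : {u : 'cV_(N+N) | u = invmx V *m y} by exists (invmx V *m y).
  have yE : y = V *m u by rewrite uE mulKVmx.
  have rel : forall k, u (lshift N k) 0 = - s * u (rshift N k) 0.
    move=> k.
    have : (B2mat n z *m y) k 0 = 0 by rewrite hB mxE.
    rewrite /B2mat yE -/V -mulmxA [V^T *m _]mulmxA -CE Cdm.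
    rewrite -[diag_mx _ *m u]vsubmxK mul_row_col mul1mx mul_scalar_mx.
    rewrite mul_diag_mx !mxE -/s => e.
    have : C (rshift N k) (rshift N k) * (u (lshift N k) 0 + s * u (rshift N k) 0) = 0.
      by rewrite -[RHS]e -cpar; ring.
    move/eqP; rewrite mulf_eq0 gt_eqF ?cpos //= addr_eq0 => /eqP ->.
    by rewrite mulNr.
  exists u; split => //.
  have M1 : V^T *m (A *m V) = diag_mx (\row_j (C j j * v j)).
    rewrite hAV mulmxA -CE {1}Cdm mulmx_diag; congr diag_mx.
    by apply/rowP => j; rewrite !mxE.
  have M2 : y^T *m A *m y = u^T *m (V^T *m (A *m V)) *m u.
    by rewrite yE trmx_mul !mulmxA.
  rewrite M2 M1 mxE.
  under eq_bigr => j _ do rewrite mul_mx_diag !mxE.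
  rewrite big_split_ord /= -big_split /=.
  apply: eq_bigr => k _.
  rewrite rel vl vr cpar; ring.
have s1 : 1 <= s by rewrite /s ler1n; lia.
have tle : forall (u : 'cV_(N+N)) k, C (rshift N k) (rshift N k) * z k *
       (u (rshift N k) 0 * u (rshift N k) 0) * (1 - s ^+ 2) <= 0.
  move=> u k; apply: mulr_ge0_le0.
    rewrite -expr2; apply: mulr_ge0; last exact: sqr_ge0.
    by apply: mulr_ge0; apply: ltW.
  by rewrite subr_le0 exprn_ege1.
split.
  move=> y /key [u [_ _ ->]].
  by apply: sumr_le0 => k _; exact: tle.
move=> h3 y hB ny0; case: (key y hB) => u [yE rel ->].
have s2 : 2 <= s by rewrite /s (ler_nat R 2); lia.
have neg : 1 - s ^+ 2 < 0 by rewrite expr2; nra.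
have [k hk] : exists k, u (rshift N k) 0 != 0.
  case: (boolP [exists k, u (rshift N k) 0 != 0]) => [/existsP //|].
  rewrite negb_exists => /forallP H0; exfalso; move/negP: ny0; apply.
  rewrite yE; apply/eqP; have -> : u = 0; last by rewrite mulmx0.
  apply/matrixP => j c; rewrite (ord1 c) mxE; case: (split_ordP j) => l ->.
    by rewrite rel; move: (H0 l); rewrite negbK => /eqP ->; rewrite mulr0.
  by move: (H0 l); rewrite negbK => /eqP ->.
rewrite (bigD1 k) //=.
have t1 : C (rshift N k) (rshift N k) * z k *
       (u (rshift N k) 0 * u (rshift N k) 0) * (1 - s ^+ 2) < 0.
  rewrite pmulr_rlt0 //; apply: mulr_gt0; first exact: mulr_gt0.
  by rewrite -expr2 lt_neqAle sqr_ge0 andbT eq_sym sqrf_eq0.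
have t2 : \sum_(i < N | i != k) C (rshift N i) (rshift N i) * z i *
       (u (rshift N i) 0 * u (rshift N i) 0) * (1 - s ^+ 2) <= 0.
  by apply: sumr_le0 => i _; exact: tle.
lra.
Qed.
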